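(* Let $q$ be an odd prime power. Then (i) $\prod\{a\in{\mathbb F}_q^\times: a \text{ and } 4-a \text{ are nonsquares in }{\mathbb F}_q\}=2$; (ii) $\prod\{a\in{\mathbb F}_q^\times: -a \text{ and } 4+a \text{ are nonsquares in }{\mathbb F}_q\}=2$ if $q\equiv\pm1\pmod 8$ and $=-2$ if $q\equiv\pm3\pmod 8$. *)

(* Defs.v *)
From HB Require Import structures.
From mathcomp Require Import all_boot all_order all_algebra all_field.
Set Implicit Arguments. Unset Strict Implicit. Unset Printing Implicit Defensive.
Import GRing.Theory.
Local Open Scope ring_scope.

Definition is_square (F : finFieldType) (a : F) : bool := [exists b : F, b ^+ 2 == a].

(* Main.v *)
Require Import Defs.
From HB Require Import structures.
From mathcomp Require Import all_boot all_order all_algebra all_field.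
From mathcomp Require Import ring lra zify.
Import GRing.Theory.
Local Open Scope ring_scope.

Section Sq.
Variable F : finFieldType.
Hypothesis hodd : odd #|F|.
Implicit Types x y a b t : F.

Lemma sqP a : reflect (exists b, b ^+ 2 = a) (is_square a).
Proof. by apply: (iffP existsP) => [[b /eqP]|[b <-]]; eauto. Qed.

Lemma sq_sqr b : is_square (b ^+ 2).
Proof. by apply/sqP; exists b. Qed.

Lemma sq0 : is_square (0 : F).
Proof. by apply/sqP; exists 0; rewrite expr0n. Qed.

Lemma sqMsq x u : u != 0 -> is_square (x * u ^+ 2) = is_square x.
Proof.
move=> u0; apply/sqP/sqP => [[z hz]|[y <-]]; last by exists (y * u); rewrite exprMn.
exists (z / u); rewrite expr_div_n hz mulfK //; exact: expf_neq0.
Qed.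

Lemma sqV x : is_square x^-1 = is_square x.
Proof.
have [->|x0] := eqVneq x 0; first by rewrite invr0.
have -> : x^-1 = x * (x^-1) ^+ 2 by rewrite expr2 mulrA divff // mul1r.
by rewrite sqMsq // invr_eq0.
Qed.

Lemma invol_prod (A : {set F}) (f g : F -> F) (c : F) :
  {in A, forall x, f x \in A} -> {in A, forall x, f (f x) = x} ->
  {in A, forall x, f x != x} -> {in A, forall x, g x * g (f x) = c} ->
  exists k, #|A| = (k.*2)%N /\ \prod_(x in A) g x = c ^+ k.
Proof.
have [n] := ubnP #|A|; elim: n A => // n IH A hA fA ffA fxA gA.
have [/eqP A0|/set0Pn [x xA]] := boolP (A == set0).
  by exists 0%N; rewrite A0 cards0 big_set0.
set B := A :\ x :\ f x.
have fxAx : f x \in A :\ x by rewrite !inE fxA // fA.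
have hB y : y \in B -> [/\ y \in A, y != x & y != f x].
  by rewrite !inE => /and3P[-> -> ->].
have cB : (#|B| < n)%N.
  rewrite (cardsD1 x A) xA (cardsD1 (f x) (A :\ x)) fxAx in hA.
  by rewrite /B; lia.
have fB : {in B, forall y, f y \in B}.
  move=> y /hB [yA yx yfx]; rewrite !inE fA // andbT.
  apply/andP; split.
    apply/negP => /eqP h; move/negP: yx; apply.
    by rewrite -(ffA y yA) h ffA.
  apply/negP => /eqP h; move/negP: yfx; apply.
  by rewrite -h ffA.
have hBA y : y \in B -> y \in A by case/hB.
have [k [hk pk]] := IH B cB fB (fun y hy => ffA y (hBA y hy))
  (fun y hy => fxA y (hBA y hy)) (fun y hy => gA y (hBA y hy)).
exists k.+1; split.
  rewrite (cardsD1 x A) xA (cardsD1 (f x) (A :\ x)) fxAx -/B hk; lia.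
rewrite (big_setD1 x xA) (big_setD1 (f x) fxAx) -/B pk.
by rewrite /= mulrA gA // exprS mulrC.
Qed.

Lemma two_neq0 : (2 : F) != 0.
Proof.
apply/negP => /eqP h2.
have h3 x : x + 1 != x by rewrite -subr_eq0 addrC addKr oner_neq0.
have [k [hk _]] := @invol_prod [set: F] (fun x => x + 1) (fun _ => 1) 1
  (fun x _ => in_setT _)
  (fun x _ => etrans (esym (addrA x 1 1)) (etrans (congr1 (fun z => x + z) h2) (addr0 x)))
  (fun x _ => h3 x)
  (fun x _ => mulr1 1).
by move: hodd; rewrite cardsT in hk; rewrite hk odd_double.
Qed.


Let m := (#|F|)./2.

Lemma qE : #|F| = (m.*2).+1.
Proof. by rewrite -[LHS]odd_double_half hodd. Qed.

Lemma m_gt0 : (0 < m)%N.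
Proof. have := finNzRing_gt1 F; rewrite qE; case: (m) => //. Qed.

Lemma expm2 x : x != 0 -> x ^+ (m.*2) = 1.
Proof.
move=> x0; apply: (mulfI x0); rewrite mulr1 -exprS -qE.
exact: expf_card.
Qed.

Lemma sq_exp x : is_square x -> x != 0 -> x ^+ m = 1.
Proof.
case/sqP=> y <- y0; rewrite -exprM mul2n expm2 //.
by apply: contraNneq y0 => ->; rewrite expr0n.
Qed.

Definition Qs := [set x : F | (x != 0) && is_square x].
Definition Rs := [set x : F | (x != 0) && (x ^+ m == 1)].

Lemma QsRs : Qs \subset Rs.
Proof. by apply/subsetP => x; rewrite !inE => /andP[x0 sx]; rewrite x0 (sq_exp x sx x0) eqxx. Qed.

Lemma card_Rs : (#|Rs| <= m)%N.
Proof.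
have hp : ('X^m - 1 : {poly F}) != 0.
  by rewrite -size_poly_eq0 size_XnsubC ?m_gt0.
have := max_poly_roots hp (rs := enum Rs).
rewrite size_XnsubC ?m_gt0 // cardE ltnS; apply => //; last exact: enum_uniq.
apply/allP => x; rewrite mem_enum inE => /andP[_ /eqP hx].
by rewrite rootE !hornerE hx subrr.
Qed.

Lemma card_Qs_ge : (m <= #|Qs|)%N.
Proof.
have h1 : #|[set x : F | x != 0]| = m.*2.
  have := cardsC [set (0:F)]; rewrite cards1 qE add1n => -[<-].
  by apply: eq_card => x; rewrite !inE.
have : (#|[set x : F | x != 0%R]| <= 2 * #|Qs|)%N.
  rewrite -sum1_card (partition_big (fun x => x ^+ 2) (fun y => y \in Qs)); last first.
    move=> x; rewrite !inE => x0; rewrite sq_sqr andbT expf_neq0 //.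
  rewrite mulnC -sum_nat_const; apply: leq_sum => y; rewrite inE => /andP[_ /sqP [r <-]].
  apply: (@leq_trans #|[set r; -r]|); last by rewrite cards2; case: (_ != _).
  rewrite sum1_card; apply: subset_leq_card; apply/subsetP => x.
  rewrite !inE => /andP[_ ]; rewrite eqf_sqr.
  by [].
by rewrite h1 mul2n leq_double.
Qed.


Lemma card_Qs : #|Qs| = m.
Proof. by apply/eqP; rewrite eqn_leq card_Qs_ge (leq_trans (subset_leq_card QsRs) card_Rs). Qed.

Lemma QsE : Qs =i Rs.
Proof.
apply/subset_cardP; last exact: QsRs.
by rewrite card_Qs; apply/eqP; rewrite eqn_leq card_Rs (leq_trans card_Qs_ge (subset_leq_card QsRs)).
Qed.

Lemma one_neq_m1 : (1 : F) != -1.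
Proof.
apply/negP => /eqP h; move/negP: two_neq0; apply.
by rewrite -[2]/(1 + 1)%:R natrD {2}h subrr.
Qed.

Lemma euler x : x != 0 -> x ^+ m = if is_square x then 1 else -1.
Proof.
move=> x0; case: ifP => sx; first exact: sq_exp.
have : (x ^+ m) ^+ 2 == 1 by rewrite -exprM muln2 expm2.
rewrite sqrf_eq1 => /orP[/eqP h|/eqP //].
have : x \in Rs by rewrite inE x0 h eqxx.
by rewrite -QsE inE x0 sx.
Qed.

Lemma sqM x y : x != 0 -> y != 0 -> is_square (x * y) = (is_square x == is_square y).
Proof.
move=> x0 y0; have xy0 : x * y != 0 by rewrite mulf_neq0.
have := euler _ xy0; rewrite exprMn (euler _ x0) (euler _ y0).
have h1 := one_neq_m1; have h2 : (-1 : F) != 1 by rewrite eq_sym.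
case: (is_square x); case: (is_square y); case: (is_square (x * y)) => //=;
  rewrite ?mulr1 ?mulrNN ?mulr1 ?mulN1r ?mulrN1 => /eqP; rewrite ?opprK ?(negbTE h1) ?(negbTE h2) //.
Qed.

Lemma card_Ns : #|[set x : F | ~~ is_square x]| = m.
Proof.
have e : [set x : F | is_square x] = 0 |: Qs.
  apply/setP => x; rewrite !inE; case: eqVneq => [->|]; by rewrite ?sq0.
have := cardsC [set x : F | is_square x].
have -> : ~: [set x : F | is_square x] = [set x | ~~ is_square x].
  by apply/setP => x; rewrite !inE.
rewrite e cardsU1 card_Qs inE eqxx /= qE; lia.
Qed.


Lemma sumb (A b : pred F) : (\sum_(a | A a) (b a : nat) = #|[pred a | A a && b a]|)%N.
Proof.
rewrite -sum1_card big_mkcond [RHS]big_mkcond; apply: eq_bigr => a _ /=.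
by rewrite inE; case: (A a); case: (b a).
Qed.

Lemma four_eq : (4 : F) = 2 ^+ 2.
Proof. by rewrite expr2 -natrM. Qed.

Lemma sq4 : is_square (4 : F).
Proof. by rewrite four_eq sq_sqr. Qed.

Lemma four_neq0 : (4 : F) != 0.
Proof. by rewrite four_eq expf_neq0 // two_neq0. Qed.

Definition Sp (a : F) := (a != 0) && ~~ is_square a && ~~ is_square (4 - a).

Definition Dp (a : F) := (a != 0) && (a != 4).

Lemma nsq_neq0 x : ~~ is_square x -> x != 0.
Proof. by apply: contraNneq => ->; exact: sq0. Qed.

Lemma card_D : (#|Dp| + 2 = m.*2.+1)%N.
Proof.
rewrite -qE -(cardC Dp).
have -> : #|[predC Dp]| = 2%N.
  have -> : #|[predC Dp]| = #|[set (0:F); 4]|.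
    by apply: eq_card => a; rewrite !inE /Dp negb_and !negbK.
  by rewrite cards2 eq_sym four_neq0.
by [].
Qed.

Lemma sum_ns : (\sum_(a | Dp a) (~~ is_square a : nat) = m)%N.
Proof.
rewrite sumb -card_Ns; apply: eq_card => a; rewrite !inE /Dp.
case sa: (is_square a); rewrite ?andbF ?andbT //=.
rewrite (nsq_neq0 a) ?sa //=; apply: contraFneq sa => ->; exact: sq4.
Qed.

Lemma sum_ns4 : (\sum_(a | Dp a) (~~ is_square (4 - a)%R : nat) = m)%N.
Proof.
rewrite (reindex_inj (h := fun a => 4 - a)); last first.
  by apply: (can_inj (g := fun a => 4 - a)) => a; rewrite subKr.
rewrite -sum_ns; apply: eq_big => a; last by rewrite subKr.
by rewrite /Dp subr_eq0 -[X in _ - a == X]subr0 (inj_eq (subrI _)) andbC (eq_sym 4).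
Qed.

Lemma sum_sq : (\sum_(b : F | b != 0%R) (is_square b : nat) = m)%N.
Proof. by rewrite sumb -card_Qs; apply: eq_card => a; rewrite !inE. Qed.


Lemma sum_eq : (\sum_(a | Dp a) ((is_square a == is_square (4 - a)%R) : nat)
   + is_square (-1 : F)%R = m)%N.
Proof.
have e1 : (\sum_(a | Dp a) ((is_square a == is_square (4 - a)%R) : nat) =
          \sum_(a | Dp a) (is_square (4 / a - 1)%R : nat))%N.
  apply: eq_bigr => a /andP[a0 a4].
  have a40 : 4 - a != 0 by rewrite subr_eq0 eq_sym.
  rewrite -sqM // -(sqMsq (4 / a - 1) a a0); congr (is_square _ : nat).
  by field.
rewrite e1 (reindex_inj (h := fun b => 4 / (b + 1))); last first.
  apply: (can_inj (g := fun c => 4 / c - 1)) => b /=.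
  by rewrite invf_div mulrC divfK ?four_neq0 // addrK.
have e2 b : Dp (4 / (b + 1)) = (b != 0) && (b != -1).
  rewrite /Dp mulf_eq0 negb_or four_neq0 /= invr_eq0 addr_eq0 andbC.
  congr (_ && _); congr negb.
  rewrite -[X in _ == X]mulr1 (inj_eq (mulfI four_neq0)) invr_eq1.
  by rewrite -[X in _ == X]add0r (inj_eq (addIr 1)).
rewrite (eq_bigl _ _ e2).
under eq_bigr => b _ do rewrite invf_div mulrC divfK ?four_neq0 // addrK.
rewrite -sum_sq [RHS](bigD1 (-1)) /=; last by rewrite oppr_eq0 oner_neq0.
by rewrite addnC.
Qed.

Lemma sum_S : (\sum_(a | Dp a) (~~ is_square a && ~~ is_square (4 - a)%R : nat) = #|Sp|)%N.
Proof.
rewrite sumb; apply: eq_card => a; rewrite !inE unfold_in /Sp /Dp /=.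
case sa: (is_square a); rewrite ?andbF ?andbT //=.
rewrite (nsq_neq0 a) ?sa //=; case s4: (is_square (4 - a)); rewrite ?andbF //= andbT.
apply: contraFneq s4 => ->; rewrite subrr; exact: sq0.
Qed.

Lemma card_S : (#|Sp| * 2 + is_square (-1 : F)%R = m + 1)%N.
Proof.
have h : (\sum_(a | Dp a) ((~~ is_square a : nat) + (~~ is_square (4 - a)%R : nat)
           + ((is_square a == is_square (4 - a)%R) : nat)) =
          \sum_(a | Dp a) (1 + (~~ is_square a && ~~ is_square (4 - a)%R : nat) * 2))%N.
  by apply: eq_bigr => a _; case: (is_square a); case: (is_square (4 - a)).
rewrite !big_split /= -big_distrl /= sum_S sum_ns sum_ns4 sum1_card in h.
have eD : #|(fun i : F => (i != 0) && (i != 4%R))| = #|Dp| by [].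
rewrite eD in h; have := sum_eq; have := card_D; rewrite -addnn; move=> h1 h2. move: h h1 h2. set T := (\sum_(a | Dp a) _)%N. move=> h h1 h2. lia.
Qed.


Lemma sqN1 : is_square (-1 : F) = ~~ odd m.
Proof.
have hN : (-1 : F) != 0 by rewrite oppr_eq0 oner_neq0.
have := euler (-1) hN; rewrite -signr_odd.
have h1 := one_neq_m1.
by case: (odd m); case: (is_square (-1)) => //= /eqP; rewrite ?expr0 ?expr1 ?(negbTE h1) // eq_sym (negbTE h1).
Qed.

Lemma Sp_facts a : Sp a -> [/\ a != 0, ~~ is_square a, ~~ is_square (4 - a) & 4 - a != 0].
Proof. by case/andP => /andP[a0 sa] s4; split => //; exact: nsq_neq0. Qed.

Lemma sixteen_eq : (16 : F) = 2 ^+ 4.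
Proof. by rewrite -natrX. Qed.

Lemma sixteen_neq0 : (16 : F) != 0.
Proof. by rewrite sixteen_eq expf_neq0 // two_neq0. Qed.

Ltac nz := repeat (apply/andP; split); first [done | rewrite ?oppr_eq0 ?mulf_neq0 ?invr_eq0 //].

Lemma prodS_odd : ~~ is_square (-1 : F) -> \prod_(a | Sp a) a = 2.
Proof.
move=> sN1; have h4 := four_neq0; have h2 := two_neq0; have h16 := sixteen_neq0.
set A := [set a | Sp a && (a != -4)].
have fS a : Sp a -> Sp (16 / a).
  case/Sp_facts => a0 sa s4 a4; apply/andP; split; first (apply/andP; split).
  - by rewrite mulf_neq0 ?invr_eq0.
  - have -> : 16 / a = a * (4 / a) ^+ 2 by field; nz.
    by rewrite sqMsq // mulf_neq0 ?invr_eq0.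
  - have -> : 4 - 16 / a = (-1 * ((4 - a) * a)) * (2 / a) ^+ 2 by field; nz.
    rewrite sqMsq ?mulf_neq0 ?invr_eq0 // sqM ?mulf_neq0 ?oppr_eq0 ?oner_neq0 //.
    by rewrite sqM // (negbTE sN1) (negbTE sa) (negbTE s4).
have ffS a : a != 0 -> 16 / (16 / a) = a.
  by move=> a0; field; nz.
have [k [hk pk]] : exists k, #|A| = (k.*2)%N /\ \prod_(x in A) id x = 16 ^+ k.
  apply: (@invol_prod A (fun a => 16 / a) id 16).
  - move=> a; rewrite !inE => /andP[Sa a4]; rewrite fS //=.
    apply: contra a4 => /eqP h; case/Sp_facts: Sa => a0 _ _ _.
    by rewrite -(ffS a a0) h; apply/eqP; field; nz.
  - by move=> a; rewrite inE => /andP[/Sp_facts [a0 _ _ _] _]; exact: ffS.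
  - move=> a; rewrite inE => /andP[/Sp_facts [a0 _ s4 a40] a4]; apply/negP => /eqP h.
    have : a ^+ 2 == 4 ^+ 2 by apply/eqP; rewrite expr2 -{2}h; field; nz.
    rewrite eqf_sqr => /orP[/eqP ha|/eqP ha]; last by rewrite ha eqxx in a4.
    by rewrite ha subrr eqxx in a40.
  - by move=> a; rewrite inE => /andP[/Sp_facts [a0 _ _ _] _] /=; field; nz.
have eS4 : Sp (-4) = ~~ is_square (2 : F).
  rewrite /Sp oppr_eq0 h4 /=.
  have -> : (4 - -4 : F) = 2 * 2 ^+ 2 by rewrite opprK four_eq; ring.
  have -> : (-4 : F) = -1 * 2 ^+ 2 by rewrite mulN1r four_eq.
  by rewrite !sqMsq // sN1.
have hcard : #|Sp| = (#|A| + Sp (-4)%R)%N.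
  rewrite (cardD1 (-4)) addnC; congr (_ + _)%N.
  by apply: eq_card => a; rewrite !inE andbC.
have hprod : \prod_(a | Sp a) a = (if Sp (-4) then -4 else 1) * \prod_(x in A) id x.
  case e: (Sp (-4)).
    rewrite (bigD1 (-4)) //=; congr (_ * _); apply: eq_bigl => a; by rewrite !inE.
  rewrite mul1r; apply: eq_bigl => a; rewrite !inE.
  by case: eqVneq => [->|]; rewrite ?e ?andbT ?andbF.
have := card_S; rewrite (negbTE sN1) addn0 hcard hk => hm.
have e2 := euler 2 h2.
rewrite hprod pk eS4 sixteen_eq -exprM.
rewrite eS4 in hm.
case s2: (is_square 2) => /=; rewrite s2 /= in hm e2.
  rewrite mul1r.
  have -> : (4 * k = m + 1)%N by lia.
  by rewrite exprD e2 mul1r expr1.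
have -> : (4 * k = (m + 1) - 2)%N by lia.
rewrite four_eq mulNr -exprD subnKC; last by lia.
by rewrite exprD e2 expr1 mulN1r opprK.
Qed.


Definition Ns := [set x : F | ~~ is_square x].

Lemma prodNs : ~~ odd m -> \prod_(t in Ns) (1 + t) = 2.
Proof.
move=> em.
have hs : size ('X^m + 1%:P : {poly F}) = (size (enum Ns)).+1.
  by rewrite size_XnaddC ?m_gt0 // -cardE card_Ns.
have hr : all (root ('X^m + 1%:P)) (enum Ns).
  apply/allP => t; rewrite mem_enum inE => st.
  by rewrite rootE !hornerE (euler _ (nsq_neq0 _ st)) (negbTE st) addNr.
have hu : uniq_roots (enum Ns) by rewrite uniq_rootsE enum_uniq.
have := all_roots_prod_XsubC hs hr hu.
rewrite (monicP (monicXnaddC _ m_gt0)) scale1r => /(congr1 (horner^~ (-1))).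
rewrite horner_prod !hornerE -signr_odd (negbTE em) expr0 big_enum /=.
under eq_bigr => t _ do rewrite hornerXsubC -opprD.
rewrite prodrN card_Ns -signr_odd (negbTE em) expr0 mul1r => h.
by rewrite -h.
Qed.

Definition sqrtF (x : F) := odflt 0 [pick r | r ^+ 2 == x].

Lemma sqrtFE x : is_square x -> sqrtF x ^+ 2 = x.
Proof.
case/sqP => b hb; rewrite /sqrtF; case: pickP => [r /eqP //|/(_ b)].
by rewrite hb eqxx.
Qed.

Definition ta (a : F) := (a - 2 + sqrtF (a * (a - 4))) / 2.

Definition hh (t : F) := (1 + t) * (1 + t^-1).

Lemma hhV t : hh t^-1 = hh t.
Proof. by rewrite /hh invrK mulrC. Qed.

Lemma ta_facts a : is_square (-1 : F) -> Sp a ->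
  [/\ ta a != 0, hh (ta a) = a, ~~ is_square (ta a), ~~ is_square (ta a)^-1
   & (ta a)^-1 != ta a].
Proof.
move=> sN1 Sa; case/Sp_facts: (Sa) => a0 sa s4 a40.
have h2 := two_neq0; have h4 := four_neq0.
have sd : is_square (a * (a - 4)).
  have -> : a * (a - 4) = -1 * (a * (4 - a)) by ring.
  by rewrite sqM ?mulf_neq0 ?oppr_eq0 ?oner_neq0 // sqM // sN1 (negbTE sa) (negbTE s4).
have hr := sqrtFE _ sd; set r := sqrtF (a * (a - 4)) in hr.
set t := ta a.
have K1 : t * t + 1 = (a - 2) * t.
  apply/eqP; rewrite -subr_eq0; apply/eqP.
  have -> : t * t + 1 - (a - 2) * t = (r ^+ 2 - a * (a - 4)) / 4.
    by rewrite /t /ta -/r; field; nz.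
  by rewrite hr subrr mul0r.
have t0 : t != 0.
  by apply/negP => /eqP t0; move: K1; rewrite t0 !mul0r add0r mulr0 => /eqP; rewrite oner_eq0.
have K3 : hh t = a.
   have -> : hh t = 2 + (t * t + 1) / t by rewrite /hh; field; nz.
  by rewrite K1; field; nz.
have t1 : 1 + t != 0 by apply: contraNneq a0 => h; rewrite -K3 /hh h mul0r.
have st : ~~ is_square t.
  have e : t * ((1 + t) / t) ^+ 2 = a by rewrite -K3 /hh; field; nz.
  by move: sa; rewrite -e sqMsq // mulf_neq0 ?invr_eq0.
split => //; first by rewrite sqV.
apply/negP => /eqP h.
have : t ^+ 2 == 1 by rewrite expr2 -{1}h mulVf.
rewrite sqrf_eq1 => /orP[/eqP e|/eqP e]; move: st; rewrite e ?sN1 //.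
by rewrite -(expr1n F 2) sq_sqr.
Qed.


Lemma prodS_even : is_square (-1 : F) -> \prod_(a | Sp a) a = 2.
Proof.
move=> sN1.
have em : ~~ odd m by rewrite -sqN1.
set S1 := [set ta a | a in Sp].
set S2 := [set (ta a)^-1 | a in Sp].
have inj1 : {in Sp &, injective ta}.
  move=> a b Sa Sb e.
  by case: (ta_facts _ sN1 Sa) => _ <- _ _ _; case: (ta_facts _ sN1 Sb) => _ <- _ _ _; rewrite e.
have inj2 : {in Sp &, injective (fun a => (ta a)^-1)}.
  by move=> a b Sa Sb /invr_inj; apply: inj1.
have dis : [disjoint S1 & S2].
  rewrite -setI_eq0; apply/eqP/setP => t; rewrite !inE; apply/negP => /andP[].
  move=> /imsetP [a Sa ->] /imsetP [b Sb e].
  case: (ta_facts _ sN1 Sa) => _ ha _ _ hne.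
  case: (ta_facts _ sN1 Sb) => _ hb _ _ _.
  have ab : a = b by rewrite -ha -hb e hhV.
  by rewrite -ab in e; move: hne; rewrite -e eqxx.
have sub : S1 :|: S2 \subset Ns.
  apply/subsetP => t; rewrite !inE => /orP[] /imsetP [a Sa ->];
    by case: (ta_facts _ sN1 Sa).
have cU : #|S1 :|: S2| = #|Ns|.
  move: (leq_card_setU S1 S2) => /leqifP; rewrite dis => /eqP ->.
  rewrite !card_in_imset // card_Ns.
  have h : (#|Sp| * 2 + 1 = m + 1)%N by have := card_S; rewrite sN1.
  by rewrite addnn -muln2; move: h; rewrite !addn1 => -[<-].
have eU : Ns =i [predU S1 & S2].
  move=> t; have /subset_cardP := cU; move=> /(_ sub) /(_ t) <-.
  by rewrite !inE.
rewrite -(prodNs em) (eq_bigl _ _ eU) bigU // !big_imset // -big_split /=.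
apply: eq_big => a; first by rewrite unfold_in.
by move=> Sa; case: (ta_facts _ sN1 Sa) => _ ha _ _ _; rewrite -{1}ha.
Qed.

Lemma prodS : \prod_(a | Sp a) a = 2.
Proof.
by case s: (is_square (-1 : F)); [exact: prodS_even | apply: prodS_odd; rewrite s].
Qed.

End Sq.

Lemma prod2 (F : finFieldType) (hodd : odd #|F|) :
  \prod_(a : F | (a != 0) && ~~ is_square (- a) && ~~ is_square (4 + a)) a
  = (-1) ^+ (odd #|@Sp F|) * 2.
Proof.
rewrite (reindex_inj (@oppr_inj F)) /=.
rewrite (eq_bigl (fun a => a \in @Sp F)); last first.
  by move=> a; rewrite unfold_in /Sp oppr_eq0 opprK.
by rewrite prodrN signr_odd (prodS F hodd).
Qed.

Lemma parity (F : finFieldType) (hodd : odd #|F|) :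
  odd #|@Sp F| = ((#|F| %% 8 == 3)%N || (#|F| %% 8 == 5)%N).
Proof.
have h := card_S F hodd; rewrite (sqN1 F hodd) in h.
have hq := qE F hodd.
move: h hq; set m := #|F|./2; set n := #|@Sp F|; set qq := #|F|.
rewrite -[m]odd_double_half -[n]odd_double_half.
case: (odd m); case: (odd n) => /= h h2; apply/esym; lia.
Qed.

Theorem theorem6p2 (F : finFieldType) (hodd : odd #|F|) :
  (\prod_(a : F | (a != 0) && ~~ is_square a && ~~ is_square (4 - a)) a = 2)
  /\ ((#|F| %% 8 == 1)%N || (#|F| %% 8 == 7)%N ->
      \prod_(a : F | (a != 0) && ~~ is_square (- a) && ~~ is_square (4 + a)) a = 2)
  /\ ((#|F| %% 8 == 3)%N || (#|F| %% 8 == 5)%N ->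
      \prod_(a : F | (a != 0) && ~~ is_square (- a) && ~~ is_square (4 + a)) a = -2).
Proof.
split; first exact: (prodS F hodd).
rewrite (prod2 F hodd) (parity F hodd).
split => h.
  have -> : ((#|F| %% 8 == 3)%N || (#|F| %% 8 == 5)%N) = false.
    by case/orP: h => /eqP ->.
  by rewrite expr0 mul1r.
by rewrite h expr1 mulN1r.
Qed.
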